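(* Let $b\in\mathbb{K}_{d,1}$ and $M>0$, and let $t_*$ be as below. There are constants $C_1=C_1(d,\alpha,M)>0$ and $C_2=C_2(d,\alpha,M)>0$ such that for all $a\in(0,M]$, $t\in(0,t_*]$ and $x,y\in\mathbb{R}^d$, $$p^{a,b}(t,x,y)\ge C_1t^{-d/2}\exp\Big(-\frac{C_2|x-y|^2}{t}\Big).$$
   Context: Standing assumption: $d\ge2$, $\alpha\in(0,2)$. $M_b(r)=\sup_x\int_{|x-y|<r}|b(y)||x-y|^{1-d}dy$; $b\in\mathbb{K}_{d,1}$ iff $M_b(r)\to0$ as $r\downarrow0$. $p^a(t,x,y)=p^a(t,x-y)$ with $\int p^a(t,z)e^{iz\cdot\xi}dz=e^{-t(|\xi|^2+a^\alpha|\xi|^\alpha)}$; $p_0^{a,b}=p^a$, $p_k^{a,b}(t,x,y)=\int_0^t\int p_{k-1}^{a,b}(t-s,x,z)b(z)\cdot\nabla_zp^a(s,z,y)dzds$. $q^a_{d,\beta}(t,z)=t^{-d/2}e^{-\beta|z|^2/t}+t^{-d/2}\wedge\frac{a^\alpha t}{|z|^{d+\alpha}}$; $\beta_U>0$ is a constant such that for all $M,T$ there is $C_U>0$ with $p^a\le C_Uq^a_{d,\beta_U}$ on $(0,T]\times\mathbb{R}^d$ for $a\in(0,M]$. $t_*=t_*(d,\alpha,M,b)>0$ and $C_0=C_0(d,\alpha,M)\ge1$ are constants such that for all $a\in(0,M]$, $t\in(0,t_*]$, $x,y$: $\sum_k|p_k^{a,b}(t,x,y)|\le C_0q^a_{d,\beta_U/2}(t,x-y)$,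 and $\sum_kp_k^{a,b}(t,x,y)\ge C_0^{-1}t^{-d/2}$ whenever $|x-y|^2<t$. $p^{a,b}$ is the jointly continuous, nonnegative kernel equal to $\sum_kp_k^{a,b}$ on $(0,t_*]\times\mathbb{R}^d\times\mathbb{R}^d$ and satisfying Chapman–Kolmogorov $p^{a,b}(t+s,x,y)=\int p^{a,b}(t,x,z)p^{a,b}(s,z,y)dz$ for all $t,s>0$. *)

(* Defs.v *)
From HB Require Import structures.
From mathcomp Require Import all_boot all_order all_algebra.
From mathcomp Require Import all_classical all_reals all_analysis.
Set Implicit Arguments. Unset Strict Implicit. Unset Printing Implicit Defensive.
Import Order.TTheory GRing.Theory Num.Theory.
Import numFieldNormedType.Exports.
Local Open Scope classical_set_scope.
Local Open Scope ring_scope.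

Section Defs.
Variable R : realType.
Variable d : nat.
Notation V := 'rV[R]_d.

(* Euclidean inner product and norm on R^d (the norm of 'rV is the sup norm) *)
Definition dotp (u v : V) : R := \sum_(i < d) u 0 i * v 0 i.
Definition enorm (u : V) : R := Num.sqrt (dotp u u).

(* Lebesgue integral over R^{n}, written as an iterated one-dimensional
   Lebesgue integral (Fubini/Tonelli); coordinate n-1 is outermost. *)
Fixpoint iint (n : nat) (f : (nat -> R) -> \bar R) : \bar R :=
  match n with
  | 0 => f (fun _ => 0)
  | m.+1 => (\int[@lebesgue_measure R]_(s in [set: R])
               iint m (fun g => f (fun i => if i == m then s else g i)))%E
  end.

Definition vec_of (g : nat -> R) : V := \row_(i < d) g i.

Definition intRd (f : V -> \bar R) : \bar R := iint d (fun g => f (vec_of g)).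

Definition grad (f : V -> R) (z : V) : V :=
  \row_(i < d) ('D_(delta_mx 0 i : V) f z).

Definition Mb (b : V -> V) (r : R) : \bar R :=
  ereal_sup (range (fun x : V =>
    intRd (fun y => if enorm (x - y) < r then
                      (enorm (b y) * powR (enorm (x - y)) (1 - d%:R))%:E
                    else 0%E))).

Definition Kato (b : V -> V) : Prop := Mb b r @[r --> 0^'+] --> 0%E.

(* p^a(t,.) characterized through its Fourier transform:
   \int p^a(t,z) e^{i z.xi} dz = exp(-t(|xi|^2 + a^alpha |xi|^alpha));
   p^a(t,.) is taken continuous and integrable. *)
Definition is_pa (alpha : R) (pa : R -> R -> V -> R) : Prop :=
  forall a t, 0 < a -> 0 < t ->
    continuous (pa a t) /\
    (intRd (fun z => (`| pa a t z |)%:E) < +oo)%E /\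
    forall xi : V,
      intRd (fun z => (pa a t z * cos (dotp z xi))%:E)
        = (expR (- (t * (enorm xi ^+ 2 + powR a alpha * powR (enorm xi) alpha))))%:E
      /\ intRd (fun z => (pa a t z * sin (dotp z xi))%:E) = 0%E.

(* q^a_{d,beta}(t,z) = t^{-d/2} e^{-beta|z|^2/t} + (t^{-d/2} /\ a^alpha t/|z|^{d+alpha});
   at z = 0 the second term is t^{-d/2} (a^alpha t / 0 = +infty). *)
Definition qfun (alpha a beta t : R) (z : V) : R :=
  powR t (- (d%:R / 2)) * expR (- (beta * enorm z ^+ 2 / t)) +
  (if z == 0 then powR t (- (d%:R / 2))
   else Order.min (powR t (- (d%:R / 2)))
                  (powR a alpha * t / powR (enorm z) (d%:R + alpha))).

Fixpoint pk (pa : R -> R -> V -> R) (b : V -> V) (k : nat) (a t : R) (x y : V)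
  : R :=
  match k with
  | 0 => pa a t (x - y)
  | k'.+1 =>
      fine (\int[@lebesgue_measure R]_(s in `]0, t[)
              intRd (fun z => (pk pa b k' a (t - s) x z *
                       dotp (b z) (grad (fun z' => pa a s (z' - y)) z))%:E))
  end.

End Defs.

(* Main.v *)
Require Import Defs.
From HB Require Import structures.
From mathcomp Require Import all_boot all_order all_algebra.
From mathcomp Require Import all_classical all_reals all_analysis.
From mathcomp Require Import ring lra.
Import Order.TTheory GRing.Theory Num.Theory.
Import numFieldNormedType.Exports.
Local Open Scope classical_set_scope.
Local Open Scope ring_scope.

Section H.
Variable R : realType.

Lemma int_mono (f1 f2 : R -> \bar R) :
  (forall x, (0 <= f1 x)%E) -> (forall x, (f1 x <= f2 x)%E) ->
  (\int[@lebesgue_measure R]_(x in [set: R]) f1 x <=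
   \int[@lebesgue_measure R]_(x in [set: R]) f2 x)%E.
Proof.
move=> f10 f12.
have f20 x : (0 <= f2 x)%E by apply: le_trans (f10 x) (f12 x).
rewrite !ge0_integralTE//; apply: ereal_sup_le => _ [h hf1 <-].
by exists h => // x; apply: le_trans (hf1 x) (f12 x).
Qed.

Lemma iint_ge0 n (f : (nat -> R) -> \bar R) :
  (forall g, (0 <= f g)%E) -> (0 <= iint n f)%E.
Proof.
elim: n f => [|n IH] f f0 /=; first exact: f0.
by apply: integral_ge0 => s _; apply: IH => g; apply: f0.
Qed.

Lemma int_box (K a b : R) : 0 <= K -> a <= b ->
  (\int[@lebesgue_measure R]_(x in [set: R]) (K * \1_(`[a, b]%classic) x)%:E
  = (K * (b - a))%:E)%E.
Proof.
move=> K0 ab.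
have := integralZl_indic (m := @lebesgue_measure R) measurableT (fun=> `[a, b]%classic) K.
rewrite /= => -> //.
  rewrite integral_indic//= setIT lebesgue_measure_itv/= lte_fin.
  have [ab'|ba] := ltP a b; first by rewrite -EFinD -EFinM.
  have -> : b = a by apply/eqP; rewrite eq_le ab ba.
  by rewrite subrr mulr0 mule0.
by move=> /lt_le_trans /(_ K0); rewrite ltxx.
Qed.


Lemma iint_lb n (w : nat -> R) (h c : R) (f : (nat -> R) -> \bar R) :
  0 <= c -> 0 <= h -> (forall g, (0 <= f g)%E) ->
  (forall g, (forall i, (i < n)%N -> w i - h <= g i <= w i + h) -> (c%:E <= f g)%E) ->
  ((c * (2 * h) ^+ n)%:E <= iint n f)%E.
Proof.
move=> c0 h0; elim: n f => [|n IH] f f0 fc /=.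
  by rewrite expr0 mulr1; apply: fc => i.
have := @int_mono (fun s => ((c * (2 * h) ^+ n) * \1_(`[w n - h, w n + h]%classic) s)%:E)
  (fun s => iint n (fun g => f (fun i => if i == n then s else g i))).
move=> HM; apply: le_trans (HM _ _).
- rewrite int_box ?mulr_ge0 ?exprn_ge0 ?mulr_ge0//; last lra.
  by rewrite lee_fin exprSr mulrA le_eqVlt; apply/orP; left; apply/eqP; congr (_ * _); lra.
- by move=> s; rewrite lee_fin mulr_ge0 ?mulr_ge0 ?exprn_ge0 ?mulr_ge0.
- move=> s; rewrite /indic; case: (boolP (s \in _)) => hs /=.
    move: hs; rewrite inE /= in_itv /= => hs; rewrite mulr1 /=; apply: IH => // g hg.
    apply: fc => i; rewrite ltnS leq_eqVlt => /orP[/eqP->|lti].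
      by rewrite eqxx.
    by rewrite ifN ?hg // neq_ltn lti.
  by rewrite mulr0; apply: iint_ge0 => g; apply: f0.
Qed.

End H.
Section C.
Variable R : realType.

Lemma enorm_sq d (v : 'rV[R]_d) : enorm v ^+ 2 = \sum_(i < d) v 0 i ^+ 2.
Proof.
rewrite /enorm sqr_sqrtr /dotp; last by apply: sumr_ge0 => i _; rewrite -expr2 sqr_ge0.
by apply: eq_bigr => i _; rewrite expr2.
Qed.

Lemma enorm_sq_le d (v : 'rV[R]_d) r : (forall i, `|v 0 i| <= r) ->
  enorm v ^+ 2 <= d%:R * r ^+ 2.
Proof.
move=> H; rewrite enorm_sq.
have -> : d%:R * r ^+ 2 = \sum_(i < d) r ^+ 2 by rewrite sumr_const card_ord mulr_natl.
apply: ler_sum => i _; have := H i; rewrite ler_norml => /andP[h1 h2].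
nra.
Qed.

Lemma powR_sq_neg d (u : R) : 0 < u ->
  powR (u ^+ 2) (- (d%:R / 2)) = (u ^+ d)^-1.
Proof.
move=> u0; rewrite -(powR_mulrn 2 (ltW u0)) -powRrM.
have -> : 2%:R * - (d%:R / 2) = - (d%:R) :> R by field.
by rewrite powRN powR_mulrn // ltW.
Qed.


Lemma chain (d : nat) (C0 tstar : R) (pab : R -> 'rV[R]_d -> 'rV[R]_d -> R) :
  (0 < d)%N -> 1 <= C0 ->
  (forall t x y, 0 < t <= tstar -> enorm (x - y) ^+ 2 < t ->
     C0^-1 * powR t (- (d%:R / 2)) <= pab t x y) ->
  (forall t x y, 0 < t -> 0 <= pab t x y) ->
  (forall t s x y, 0 < t -> 0 < s ->
     (pab (t + s) x y)%:E = intRd (fun z => (pab t x z * pab s z y)%:E)) ->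
  forall k s (x y : 'rV[R]_d), 0 < s -> (4 * d%:R * s) ^+ 2 <= tstar ->
    (forall i, `|x 0 i - y 0 i| <= k.+1%:R * s) ->
    (C0^-1 / (2 * d%:R) ^+ d) ^+ k.+1 / ((2 * d%:R) ^+ d * (2 * s) ^+ d)
      <= pab (k.+1%:R * (4 * d%:R * s) ^+ 2) x y.
Proof.
move=> d0 C01 diag pos CK k s x y s0 ts.
have dR : 1 <= d%:R :> R by rewrite ler1n.
have C00 : 0 < C0 by lra.
set A := (2 * d%:R) ^+ d; set B := (2 * s) ^+ d; set tau := (4 * d%:R * s) ^+ 2.
have A1 : 1 <= A by rewrite exprn_ege1 //; lra.
have B0 : 0 < B by rewrite exprn_gt0 //; lra.
have tau0 : 0 < tau by rewrite exprn_gt0 //; nra.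
have ptau : powR tau (- (d%:R / 2)) = (A * B)^-1.
  by rewrite powR_sq_neg; [rewrite /A /B -exprMn; congr (_ ^+ _ )^-1; ring|nra].
set gam := C0^-1 / A.
have gam0 : 0 <= gam by rewrite /gam divr_ge0 // ?invr_ge0; lra.
have gamC : gam <= C0^-1.
  rewrite /gam ler_pdivrMr; last lra.
  by rewrite ler_peMr // invr_ge0; lra.
elim: k x y => [|k IH] x y hxy.
  rewrite mul1r expr1; apply: le_trans (diag _ _ _ _ _).
  - by rewrite -ptau ler_wpM2r // powR_ge0.
  - by rewrite tau0.
  - apply: (le_lt_trans (@enorm_sq_le _ _ s _)).
      by move=> i; rewrite !mxE; have := hxy i; rewrite mul1r.
    rewrite /tau; nra.
have kk0 : 0 < k.+2%:R :> R by rewrite ltr0n.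
pose i0 : 'I_d := Ordinal d0.
pose del (i : 'I_d) := (y 0 i - x 0 i) / k.+2%:R.
pose w (j : nat) := let i := insubd i0 j in x 0 i + k%:R * del i.
have delb i : - s <= del i <= s.
  have := hxy i; rewrite ler_norml => /andP[h1 h2].
  rewrite /del ler_pdivlMr // ler_pdivrMr //; apply/andP; split; lra.
have yxd i : y 0 i - x 0 i = k.+2%:R * del i by rewrite /del; field; lra.
have -> : k.+2%:R * tau = k.+1%:R * tau + tau by rewrite -[k.+2]addn1 natrD mulrDl mul1r.
rewrite -lee_fin CK ?mulr_gt0 ?ltr0n //.
set c := (gam ^+ k.+1 / (A * B)) * (C0^-1 / (A * B)).
have c0 : 0 <= c by rewrite /c !mulr_ge0 ?exprn_ge0 ?invr_ge0 //; nra.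
apply: (@le_trans _ _ ((c * (2 * s) ^+ d)%:E)).
  rewrite lee_fin le_eqVlt; apply/orP; left; apply/eqP.
  rewrite /c /gam exprSr -/B; field; apply/andP; split; lra.
apply: (@iint_lb _ d w s c) => //; first lra.
  by move=> g; rewrite lee_fin mulr_ge0 // pos // ?mulr_gt0 ?ltr0n.
move=> g hg.
set z := @vec_of R d g.
have hz i : - s <= z 0 i - w i <= s.
  by rewrite mxE; have := hg i (ltn_ord i); lra.
have wi (i : 'I_d) : w i = x 0 i + k%:R * del i by rewrite /w /= valKd.
rewrite lee_fin /c; apply: ler_pM.
- by rewrite mulr_ge0 ?exprn_ge0 ?invr_ge0 //; nra.
- by rewrite mulr_ge0 ?invr_ge0 //; nra.
- apply: IH => i; have := hz i; have := delb i; rewrite wi ler_norml => h1 h2.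
  have k0 : 0 <= k%:R :> R by rewrite ler0n.
  move: h1 h2 => /andP[h1 h1'] /andP[h2 h2']; rewrite -natr1 in hxy *; apply/andP; split; nra.
- rewrite -ptau; apply: diag; first by rewrite tau0.
  apply: (le_lt_trans (@enorm_sq_le _ _ (3 * s) _)).
    move=> i; rewrite !mxE; have := hz i; have := delb i; have := yxd i.
    rewrite wi ler_norml => h1 /andP[h2 h2'] /andP[h3 h3'].
    have k0 : 0 <= k%:R :> R by rewrite ler0n.
    rewrite -[k.+2]addn2 natrD in h1.
    have zi : z 0 i = g i by rewrite mxE.
    rewrite zi in h3 h3'; apply/andP; split; nra.
  have ds : 0 < d%:R * s ^+ 2 by rewrite mulr_gt0 // ?exprn_gt0 //; lra.
  rewrite /tau; nra.
Qed.

End C.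

Theorem lemma5p7 (R : realType) (d : nat) (alpha M : R)
    (pa : R -> R -> 'rV[R]_d -> R) (betaU C0 : R) :
  (2 <= d)%N -> 0 < alpha < 2 -> 0 < M ->
  is_pa alpha pa ->
  0 < betaU ->
  (forall M' T : R, 0 < M' -> 0 < T -> exists CU : R, 0 < CU /\
     forall a t (z : 'rV[R]_d), 0 < a <= M' -> 0 < t <= T ->
       pa a t z <= CU * qfun alpha a betaU t z) ->
  1 <= C0 ->
  exists C1 C2 : R, 0 < C1 /\ 0 < C2 /\
  forall (b : 'rV[R]_d -> 'rV[R]_d) (tstar : R)
         (pab : R -> R -> 'rV[R]_d -> 'rV[R]_d -> R),
    Kato b ->
    0 < tstar ->
    (* defining properties of t_* and C_0 *)
    (forall a t (x y : 'rV[R]_d), 0 < a <= M -> 0 < t <= tstar ->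
       (forall n, \sum_(k < n) `| pk pa b k a t x y |
                    <= C0 * qfun alpha a (betaU / 2) t (x - y)) /\
       (enorm (x - y) ^+ 2 < t ->
          C0^-1 * powR t (- (d%:R / 2))
            <= limn (fun n => \sum_(k < n) pk pa b k a t x y))) ->
    (* defining properties of p^{a,b} *)
    (forall a, 0 < a <= M ->
       (forall t (x y : 'rV[R]_d), 0 < t ->
          {for (t, (x, y)), continuous
             (fun p : R * ('rV[R]_d * 'rV[R]_d) => pab a p.1 p.2.1 p.2.2)}) /\
       (forall t (x y : 'rV[R]_d), 0 < t -> 0 <= pab a t x y) /\
       (forall t (x y : 'rV[R]_d), 0 < t <= tstar ->
          (fun n => \sum_(k < n) pk pa b k a t x y) @ \oo --> pab a t x y) /\
       (forall t s (x y : 'rV[R]_d), 0 < t -> 0 < s ->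
          (pab a (t + s) x y)%:E
            = intRd (fun z => (pab a t x z * pab a s z y)%:E))) ->
    forall a t (x y : 'rV[R]_d), 0 < a <= M -> 0 < t <= tstar ->
      C1 * powR t (- (d%:R / 2)) * expR (- (C2 * enorm (x - y) ^+ 2 / t))
        <= pab a t x y.
Proof.
move=> d2 _ _ _ _ _ C01.
have d0 : (0 < d)%N by apply: leq_trans d2.
have dR : 2 <= d%:R :> R by rewrite (ler_nat R 2 d).
set A := (2 * d%:R) ^+ d : R.
have A1 : 1 < A by rewrite /A exprn_egt1 -?lt0n //; lra.
set gam := C0^-1 / A.
have gam0 : 0 < gam by rewrite /gam divr_gt0 // ?invr_gt0; lra.
have gam1 : gam < 1.
  rewrite /gam ltr_pdivrMr; last lra.
  rewrite mul1r; apply: le_lt_trans A1; rewrite invf_le1; lra.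
have lg : ln gam < 0 by apply: ln_lt0; rewrite gam0 gam1.
exists gam, (- ln gam * (16 * d%:R ^+ 2)).
split => //; split; first by rewrite mulr_gt0 ?oppr_gt0 // mulr_gt0 // exprn_gt0; lra.
move=> b tstar pab _ ts0 Ht Hp a t x y aM /andP[t0 tts].
have [_ [Hpos [Hlim HCK]]] := Hp a aM.
have diag : forall t x y, 0 < t <= tstar -> enorm (x - y) ^+ 2 < t ->
    C0^-1 * powR t (- (d%:R / 2)) <= pab a t x y.
  move=> t' x' y' tt' hxy; have [_ H2] := Ht a t' x' y' aM tt'.
  by rewrite -(cvg_lim (@Rhausdorff R) (Hlim _ _ _ tt')); apply: H2.
set r := enorm (x - y).
have r0 : 0 <= r by apply: sqrtr_ge0.
set X := 16 * d%:R ^+ 2 * r ^+ 2 / t.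
have X0 : 0 <= X by rewrite /X divr_ge0 ?mulr_ge0 ?exprn_ge0 //; lra.
set m := Num.truncn X.
have mX : m%:R <= X by rewrite truncn_le.
have Xm : X < m.+1%:R by apply: truncnS_gt.
set N := m.+1%:R : R.
have N1 : 1 <= N by rewrite /N ler1n.
set tau := t / N.
have tau0 : 0 < tau by rewrite /tau divr_gt0 //; lra.
have taut : tau <= t by rewrite /tau ler_pdivrMr; nra.
set s := Num.sqrt tau / (4 * d%:R).
have s0 : 0 < s by rewrite /s divr_gt0 ?sqrtr_gt0 //; lra.
have taus : (4 * d%:R * s) ^+ 2 = tau.
  rewrite /s mulrC divfK ?sqr_sqrtr //; lra.
have Nt : N * tau = t by rewrite /tau mulrC divfK //; lra.
have coord : forall i, `|x 0 i - y 0 i| <= m.+1%:R * s.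
  move=> i; apply: (@le_trans _ _ r).
    rewrite /r /enorm -sqrtr_sqr ler_sqrt; last first.
      by rewrite /dotp; apply: sumr_ge0 => j _; rewrite -expr2 sqr_ge0.
    rewrite /dotp (bigD1 i) //= !mxE -expr2 lerDl.
    by apply: sumr_ge0 => j _; rewrite -expr2 sqr_ge0.
  have e1 : (N * s) ^+ 2 * (16 * d%:R ^+ 2) = N * t.
    by rewrite -Nt -taus; ring.
  have e2 : r ^+ 2 * (16 * d%:R ^+ 2) = X * t by rewrite /X; field; lra.
  have rNs : r ^+ 2 <= (N * s) ^+ 2.
    have h16 : 0 < 16 * d%:R ^+ 2 :> R by rewrite mulr_gt0 // exprn_gt0; lra.
    rewrite -(ler_pM2r h16) e1 e2; nra.
  rewrite -(@ler_pXn2r _ 2) // ?nnegrE //; apply: mulr_ge0 => //; lra.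
have := @chain R d C0 tstar (pab a) d0 C01 diag (fun t x y h => Hpos t x y h) HCK m s x y s0.
rewrite taus Nt => /(_ (le_trans taut tts) coord) H.
apply: le_trans H; rewrite -/A -/gam.
have ptau : powR tau (- (d%:R / 2)) = (A * (2 * s) ^+ d)^-1.
  have h4 : 0 < 4 * d%:R * s.
    by apply: mulr_gt0 => //; lra.
  have := @powR_sq_neg R d _ h4; rewrite taus => ->.
  by rewrite /A -exprMn; congr (_ ^+ _)^-1; ring.
have pt : powR t (- (d%:R / 2)) <= powR tau (- (d%:R / 2)).
  rewrite !powRN lef_pV2 ?posrE ?powR_gt0 //.
  by apply: ge0_ler_powR => //; rewrite ?nnegrE; lra.
have ex : gam * expR (- (- ln gam * (16 * d%:R ^+ 2) * r ^+ 2 / t)) <= gam ^+ m.+1.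
  have -> : - (- ln gam * (16 * d%:R ^+ 2) * r ^+ 2 / t) = ln gam * X.
    by rewrite /X; field; lra.
  rewrite exprS ler_pM2l // -{2}(lnK (gam0 : gam \in Num.pos)) -expRM_natl ler_expR.
  by rewrite [_ * ln _]mulrC ler_nM2l.
rewrite mulrAC -ptau; apply: ler_pM; [|exact: powR_ge0|exact: ex|exact: pt].
by apply: mulr_ge0; [exact: ltW gam0 | exact: expR_ge0].
Qed.
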